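(* Consider $N$ homogeneous agents $\dot x_i=Ax_i+Bu_i$, $y_i=Cx_i$ ($i=1,\dots,N$), with $x_i\in\mathbb{R}^n$, $u_i\in\mathbb{R}^m$, $y_i\in\mathbb{R}^p$, $(A,B)$ stabilizable and $(C,A)$ detectable, communicating over a weighted directed graph with Laplacian $L=[\ell_{ij}]$, so that agent $i$ receives $\zeta_i=\sum_{j=1}^N a_{ij}(y_i-y_j)=\sum_{j=1}^N\ell_{ij}y_j$. Suppose a (possibly nonlinear, dynamic) protocol is applied, either non-collaborative ($\dot\xi_i=f_i(\xi_i,\zeta_i)$, $u_i=g_i(\xi_i,\zeta_i)$) or collaborative ($\dot x_{i,c}=f(x_{i,c},\zeta_i,\tilde\zeta_i)$, $u_i=g(x_{i,c},\zeta_i,\tilde\zeta_i)$ with $\tilde\zeta_i=\sum_j\ell_{ij}x_{j,c}$), and suppose that it achieves network stability, i.e. for all initial conditions the closed-loop solutions exist on $[0,\infty)$ and $\zeta_i(t)\to0$ as $t\to\infty$ for every $i$ (in the collaborative case additionally $\sum_j a_{ij}(x_{i,c}-x_{j,c})\to0$). Then: (i) if the graph contains a directed spanning tree, the agents achieve output synchronization: $y_i(t)-y_j(t)\to0$ for all $i,j$; (ii) if the graph has no directed spanning tree, so that it has $k>1$ basic bicomponents $\mathcal B_1,\dots,\mathcal B_k$, then for each $i\in\{1,\dots,k\}$ there exists a signal $y_s^i$ such that $y_j(t)-y_s^i(t)\to0$ for every agent $j\in\mathcal B_i$; and for every agent $j$ not belonging to any basic bicomponent there exist coefficients $\beta_{j,1},\dots,\beta_{j,k}\ge0$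 with $\sum_{i=1}^k\beta_{j,i}=1$, depending only on the network (the weights $a_{ij}$) and not on initial conditions, such that $y_j(t)-\sum_{i=1}^k\beta_{j,i}y_s^i(t)\to0$.
   Context: Graph conventions: nodes $\{1,\dots,N\}$, weights $a_{ij}\ge0$, $a_{ii}=0$, and $a_{ij}>0$ means an edge from node $j$ to node $i$ (agent $i$ receives information from agent $j$). The Laplacian is $\ell_{ii}=\sum_{k}a_{ik}$, $\ell_{ij}=-a_{ij}$ for $i\ne j$. A directed spanning tree is a subgraph containing all nodes in which every node except one root has exactly one parent. A basic bicomponent is a maximal strongly connected set of nodes that receives no edges from nodes outside it; after permutation of nodes the Laplacian has the block upper-triangular form with first block row $(L_0, L_{01},\dots,L_{0k})$ and diagonal blocks $L_1,\dots,L_k$ (the Laplacians of the basic bicomponents, each with a simple zero eigenvalue), with all other blocks zero, and $L_0$ (the non-basic nodes) having all eigenvalues in the open right half plane. The number of basic bicomponents equals the multiplicity of the zero eigenvalue of $L$. *)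

(* Defs.v *)
From HB Require Import structures.
From mathcomp Require Import all_boot all_order all_algebra.
From mathcomp Require Import all_classical all_reals all_analysis.
From mathcomp Require Import complex.
Set Implicit Arguments. Unset Strict Implicit. Unset Printing Implicit Defensive.
Import Order.TTheory GRing.Theory Num.Theory.
Import numFieldNormedType.Exports.
Local Open Scope ring_scope.
Local Open Scope classical_set_scope.

Section Defs.
Variable R : realType.

(* a i j > 0 : edge from node j to node i (agent i receives from agent j). *)
Definition laplacian (N : nat) (a : 'M[R]_N) : 'M[R]_N :=
  \matrix_(i, j) (if i == j then \sum_(k < N) a i k else - a i j).

Definition gedge (N : nat) (a : 'M[R]_N) : rel 'I_N := fun u v => 0 < a v u.

(* directed spanning tree: a root r and a parent map par such that every
   non-root node i has the tree edge par i -> i in the graph, and following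
   parents from any node reaches the root (so the subgraph is a tree). *)
Definition has_spanning_tree (N : nat) (a : 'M[R]_N) : Prop :=
  exists (r : 'I_N) (par : 'I_N -> 'I_N),
    (forall i, i != r -> 0 < a i (par i)) /\
    (forall i, exists k, iter k par i = r).

Definition strongly_connectedb (N : nat) (a : 'M[R]_N) (S : {set 'I_N}) : bool :=
  [forall i in S, forall j in S, connect (gedge a) i j].

Definition basic_bicomponentb (N : nat) (a : 'M[R]_N) (S : {set 'I_N}) : bool :=
  [&& [exists i, i \in S], strongly_connectedb a S,
      [forall T : {set 'I_N},
         ((S \subset T) && strongly_connectedb a T) ==> (T == S)] &
      [forall i in S, forall j, (j \notin S) ==> (a i j == 0)]].

Definition basic_bicomponents (N : nat) (a : 'M[R]_N) : {set {set 'I_N}} :=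
  [set S | basic_bicomponentb a S].

Definition nonbasic (N : nat) (a : 'M[R]_N) (j : 'I_N) : bool :=
  [forall S in basic_bicomponents a, j \notin S].

Definition hurwitz (n : nat) (M : 'M[R]_n) : Prop :=
  forall z : R[i], root (map_poly (fun x : R => (x%:C)%C) (char_poly M)) z ->
    complex.Re z < 0.

Definition stabilizable (n m : nat) (A : 'M[R]_n) (B : 'M[R]_(n, m)) : Prop :=
  exists F : 'M[R]_(m, n), hurwitz (A + B *m F).

Definition detectable (n p : nat) (C : 'M[R]_(p, n)) (A : 'M[R]_n) : Prop :=
  exists K : 'M[R]_(n, p), hurwitz (A + K *m C).

(* x is a solution on [0, oo) of xdot = dx: right-continuous at 0 and
   differentiable with derivative dx t at every t > 0 (entrywise). *)
Definition deriv_on (k : nat) (x dx : R -> 'cV[R]_k) : Prop :=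
  (forall r : 'I_k, (fun s => x s r ord0) @ (0:R)^'+ --> x 0 r ord0) /\
  (forall t : R, 0 < t -> forall r : 'I_k,
      is_derive (t : R) (1 : R) (fun s => x s r ord0) (dx t r ord0)).

Definition vanishes (k : nat) (f : R -> 'cV[R]_k) : Prop :=
  forall r : 'I_k, (fun t => f t r ord0) @ +oo --> (0 : R).

Definition zeta (N n p : nat) (a : 'M[R]_N) (C : 'M[R]_(p, n))
  (x : 'I_N -> R -> 'cV[R]_n) (i : 'I_N) (t : R) : 'cV[R]_p :=
  \sum_(j < N) laplacian a i j *: (C *m x j t).

Definition nc_solution (N n m p : nat) (a : 'M[R]_N) (A : 'M[R]_n)
  (B : 'M[R]_(n, m)) (C : 'M[R]_(p, n)) (q : 'I_N -> nat)
  (f : forall i, 'cV[R]_(q i) -> 'cV[R]_p -> 'cV[R]_(q i))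
  (g : forall i, 'cV[R]_(q i) -> 'cV[R]_p -> 'cV[R]_m)
  (x : 'I_N -> R -> 'cV[R]_n) (xi : forall i, R -> 'cV[R]_(q i)) : Prop :=
  forall i : 'I_N,
    deriv_on (x i) (fun t => A *m x i t + B *m g i (xi i t) (zeta a C x i t)) /\
    deriv_on (xi i) (fun t => f i (xi i t) (zeta a C x i t)).

Definition nc_network_stable (N n m p : nat) (a : 'M[R]_N) (A : 'M[R]_n)
  (B : 'M[R]_(n, m)) (C : 'M[R]_(p, n)) (q : 'I_N -> nat)
  (f : forall i, 'cV[R]_(q i) -> 'cV[R]_p -> 'cV[R]_(q i))
  (g : forall i, 'cV[R]_(q i) -> 'cV[R]_p -> 'cV[R]_m) : Prop :=
  (forall (x0 : 'I_N -> 'cV[R]_n) (xi0 : forall i, 'cV[R]_(q i)),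
     exists x xi, nc_solution a A B C f g x xi /\
       (forall i, x i 0 = x0 i) /\ (forall i, xi i 0 = xi0 i)) /\
  (forall x xi, nc_solution a A B C f g x xi ->
     forall i, vanishes (zeta a C x i)).

Definition nc_output (N n m p : nat) (a : 'M[R]_N) (A : 'M[R]_n)
  (B : 'M[R]_(n, m)) (C : 'M[R]_(p, n)) (q : 'I_N -> nat)
  (f : forall i, 'cV[R]_(q i) -> 'cV[R]_p -> 'cV[R]_(q i))
  (g : forall i, 'cV[R]_(q i) -> 'cV[R]_p -> 'cV[R]_m)
  (y : 'I_N -> R -> 'cV[R]_p) : Prop :=
  exists x xi, nc_solution a A B C f g x xi /\
    (forall i t, y i t = C *m x i t).

Definition zetat (N q : nat) (a : 'M[R]_N) (xc : 'I_N -> R -> 'cV[R]_q)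
  (i : 'I_N) (t : R) : 'cV[R]_q :=
  \sum_(j < N) laplacian a i j *: xc j t.

Definition c_solution (N n m p q : nat) (a : 'M[R]_N) (A : 'M[R]_n)
  (B : 'M[R]_(n, m)) (C : 'M[R]_(p, n))
  (f : 'cV[R]_q -> 'cV[R]_p -> 'cV[R]_q -> 'cV[R]_q)
  (g : 'cV[R]_q -> 'cV[R]_p -> 'cV[R]_q -> 'cV[R]_m)
  (x : 'I_N -> R -> 'cV[R]_n) (xc : 'I_N -> R -> 'cV[R]_q) : Prop :=
  forall i : 'I_N,
    deriv_on (x i)
      (fun t => A *m x i t + B *m g (xc i t) (zeta a C x i t) (zetat a xc i t)) /\
    deriv_on (xc i) (fun t => f (xc i t) (zeta a C x i t) (zetat a xc i t)).

Definition c_network_stable (N n m p q : nat) (a : 'M[R]_N) (A : 'M[R]_n)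
  (B : 'M[R]_(n, m)) (C : 'M[R]_(p, n))
  (f : 'cV[R]_q -> 'cV[R]_p -> 'cV[R]_q -> 'cV[R]_q)
  (g : 'cV[R]_q -> 'cV[R]_p -> 'cV[R]_q -> 'cV[R]_m) : Prop :=
  (forall (x0 : 'I_N -> 'cV[R]_n) (xc0 : 'I_N -> 'cV[R]_q),
     exists x xc, c_solution a A B C f g x xc /\
       (forall i, x i 0 = x0 i) /\ (forall i, xc i 0 = xc0 i)) /\
  (forall x xc, c_solution a A B C f g x xc ->
     forall i, vanishes (zeta a C x i) /\
       vanishes (fun t => \sum_(j < N) a i j *: (xc i t - xc j t))).

Definition c_output (N n m p q : nat) (a : 'M[R]_N) (A : 'M[R]_n)
  (B : 'M[R]_(n, m)) (C : 'M[R]_(p, n))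
  (f : 'cV[R]_q -> 'cV[R]_p -> 'cV[R]_q -> 'cV[R]_q)
  (g : 'cV[R]_q -> 'cV[R]_p -> 'cV[R]_q -> 'cV[R]_m)
  (y : 'I_N -> R -> 'cV[R]_p) : Prop :=
  exists x xc, c_solution a A B C f g x xc /\
    (forall i t, y i t = C *m x i t).

Definition stable_protocol_output (N n m p : nat) (a : 'M[R]_N)
  (A : 'M[R]_n) (B : 'M[R]_(n, m)) (C : 'M[R]_(p, n))
  (y : 'I_N -> R -> 'cV[R]_p) : Prop :=
  (exists (q : 'I_N -> nat)
          (f : forall i, 'cV[R]_(q i) -> 'cV[R]_p -> 'cV[R]_(q i))
          (g : forall i, 'cV[R]_(q i) -> 'cV[R]_p -> 'cV[R]_m),
      nc_network_stable a A B C f g /\ nc_output a A B C f g y) \/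
  (exists (q : nat)
          (f : 'cV[R]_q -> 'cV[R]_p -> 'cV[R]_q -> 'cV[R]_q)
          (g : 'cV[R]_q -> 'cV[R]_p -> 'cV[R]_q -> 'cV[R]_m),
      c_network_stable a A B C f g /\ c_output a A B C f g y).

End Defs.

(* Main.v *)
Require Import Defs.
From HB Require Import structures.
From mathcomp Require Import all_boot all_order all_algebra.
From mathcomp Require Import all_classical all_reals all_analysis.
From mathcomp Require Import complex.
From mathcomp Require Import ring.
Import Order.TTheory GRing.Theory Num.Theory.
Import numFieldNormedType.Exports.
Local Open Scope ring_scope.

Section V.
Local Open Scope classical_set_scope.

Lemma vanish_sum (R : realType) (I : finType) (f : I -> R -> R) :
  (forall k, f k @ +oo --> (0:R)) ->
  (fun t => \sum_k f k t) @ +oo --> (0:R).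
Proof.
move=> Hf; rewrite [X in _ --> X](_ : _ = \sum_(k : I) (0:R)); last by rewrite big1.
rewrite /index_enum; elim: (Finite.enum I) => [|k s IH].
  rewrite big_nil; under eq_cvg do rewrite big_nil; exact: cvg_cst.
rewrite big_cons; under eq_cvg do rewrite big_cons.
exact: cvgD.
Qed.

Lemma vanish_mulr (R : realType) (f : R -> R) (c : R) :
  f @ +oo --> (0:R) -> (fun t => f t * c) @ +oo --> (0:R).
Proof.
move=> Hf; have := cvgM Hf (cvg_cst c); rewrite mul0r; exact.
Qed.

Lemma vanish_sub (R : realType) (f g : R -> R) :
  f @ +oo --> (0:R) -> g @ +oo --> (0:R) -> (fun t => f t - g t) @ +oo --> (0:R).
Proof. move=> Hf Hg; have := cvgB Hf Hg; rewrite subr0; exact. Qed.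

End V.

Section G.
Variable R : realType.
Variable N : nat.
Variable a : 'M[R]_N.
Hypothesis Ha_nonneg : forall i j, 0 <= a i j.
Hypothesis Ha_diag : forall i, a i i = 0.

Definition Lw (w : 'I_N -> R) i := \sum_j a i j * (w i - w j).

Lemma lapE (w : 'I_N -> R) i :
  \sum_j laplacian a i j * w j = Lw w i.
Proof.
rewrite /Lw (bigD1 i) //= mxE eqxx.
under eq_bigr => j /negbTE ji do rewrite mxE eq_sym ji.
under [RHS]eq_bigr do rewrite mulrBr.
rewrite sumrB -mulr_suml [X in _ = _ - X](bigD1 i) //= Ha_diag mul0r add0r.
by rewrite -sumrN; congr (_ + _); apply: eq_bigr => j _; rewrite mulNr.
Qed.

Definition reach (Rep : {set 'I_N}) :=
  forall X : {set 'I_N}, (forall i j, i \in X -> 0 < a i j -> j \in X) ->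
    forall i, i \in X -> exists r, r \in Rep /\ r \in X.

Lemma maxp Rep (hR : reach Rep) (w : 'I_N -> R) :
  (forall i, Lw w i = 0) -> (forall r, r \in Rep -> w r <= 0) -> forall j, w j <= 0.
Proof.
move=> HL HR j; rewrite leNgt; apply/negP => wj.
have [i0 _ Hmax] := @arg_maxP _ _ _ j xpredT w isT.
have closed : forall i k, i \in [set i | w i0 <= w i] -> 0 < a i k ->
    k \in [set i | w i0 <= w i].
  move=> i k; rewrite !inE => Hi aik.
  have wi : w i = w i0 by apply/le_anti; rewrite Hi andbT; exact: (Hmax i isT).
  have Hk : a i k * (w i - w k) = 0.
    apply: (@psumr_eq0P _ _ xpredT (fun k => a i k * (w i - w k)) _ (HL i) k isT).
    move=> l _; apply: mulr_ge0 => //; rewrite subr_ge0 wi; exact: (Hmax l isT).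
  move/eqP: Hk; rewrite mulf_eq0 gt_eqF //= subr_eq0 => /eqP <-.
  by rewrite wi.
have i0X : i0 \in [set i | w i0 <= w i].
by rewrite inE.
have [r [rR rX]] := hR _ closed i0 i0X.
move: rX; rewrite inE => rX.
have := HR r rR; have := Hmax j isT.
move=> h1 h2; have : 0 < w r.
  apply: (lt_le_trans wj); apply: (le_trans h1); exact: rX.
by rewrite ltNge h2.
Qed.

Lemma inj Rep (hR : reach Rep) (w : 'I_N -> R) :
  (forall i, Lw w i = 0) -> (forall r, r \in Rep -> w r = 0) -> forall j, w j = 0.
Proof.
move=> HL HR j; apply/le_anti; apply/andP; split.
  by apply: (@maxp Rep hR w) => // r /HR ->.
rewrite -oppr_le0; apply: (@maxp Rep hR (fun i => - w i)).
  move=> i; rewrite /Lw; under eq_bigr do rewrite -opprD mulrN.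
  by rewrite sumrN -/(Lw w i) HL oppr0.
by move=> r /HR ->; rewrite oppr0.
Qed.


Lemma inj_rinv K (Q : 'M[R]_(N, K)) :
  (forall v : 'rV_N, v *m Q = 0 -> v = 0) -> exists B, Q *m B = 1%:M.
Proof.
move=> H; apply/row_freeP; rewrite -kermx_eq0.
have E : forall i, row i (kermx Q) = 0.
  by move=> i; apply: H; apply/sub_kermxP; exact: row_sub.
set M := kermx Q; apply/eqP/matrixP => i j.
have := congr1 (fun X : 'rV[R]_N => X 0 j) (E i); rewrite /= mxE => ->.
by rewrite !mxE.
Qed.

Lemma partA Rep (hR : reach Rep) (w : 'I_N -> R -> R) :
  (forall i, (fun t => Lw (w^~ t) i) @ +oo --> (0:R))%classic ->
  (forall r t, r \in Rep -> w r t = 0) ->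
  forall j, (w j @ +oo --> (0:R))%classic.
Proof.
move=> HL HR j.
pose Q1 : 'M[R]_N := (laplacian a)^T.
pose D : 'M[R]_N := diag_mx (\row_i (i \in Rep)%:R).
have [B HB] : exists B, row_mx Q1 D *m B = 1%:M.
  apply: inj_rinv => v; rewrite mul_mx_row => /eqP; rewrite row_mx_eq0 => /andP[/eqP h1 /eqP h2].
  apply/rowP => i; rewrite mxE.
  apply: (@inj Rep hR (fun i => v 0 i)) => [k|r rR].
    rewrite -lapE; transitivity ((v *m Q1) 0 k); last by rewrite h1 mxE.
    by rewrite mxE; apply: eq_bigr => l _; rewrite !mxE mulrC.
  move/rowP: h2 => /(_ r); rewrite mul_mx_diag !mxE rR mulr1 => ->.
  by [].
have key : forall t, w j t = \sum_k Lw (w^~ t) k * (usubmx B) k j.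
  move=> t; pose vt : 'rV[R]_N := \row_i w i t.
  have : vt = vt *m row_mx Q1 D *m B by rewrite -mulmxA HB mulmx1.
  rewrite mul_mx_row -[B]vsubmxK mul_row_col.
  have -> : vt *m D = 0.
    apply/rowP => i; rewrite mul_mx_diag !mxE.
    by case: (boolP (i \in Rep)) => iR; [rewrite HR // mul0r | rewrite mulr0].
  rewrite mul0mx addr0 => /rowP /(_ j) E.
  have -> : w j t = vt 0 j by rewrite mxE.
  rewrite E mxE; apply: eq_bigr => k _; congr (_ * _).
  rewrite mxE -lapE.
  by apply: eq_bigr => l _; rewrite !mxE mulrC.
  by rewrite vsubmxK.
rewrite (eq_cvg _ _ key).
apply: vanish_sum => k; exact: vanish_mulr.
Qed.

Notation g := (gedge a).
Definition anc (i : 'I_N) := [set u | connect g u i].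

Lemma closed_connect (X : {set 'I_N}) :
  (forall i j, i \in X -> 0 < a i j -> j \in X) ->
  forall u v, connect g u v -> v \in X -> u \in X.
Proof.
move=> HX u v /connectP [p Hp ->]; elim: p u Hp => [|x p IH] u //= /andP[gux Hp] Hl.
exact: (HX x u (IH x Hp Hl) gux).
Qed.

Lemma source_ex i : exists j, connect g j i /\ forall u, connect g u j -> connect g j u.
Proof.
have [n] := ubnP #|anc i|; elim: n i => // n IH i; rewrite ltnS => Hn.
case: (boolP [forall u, connect g u i ==> connect g i u]) => [/forallP H|].
  by exists i; split => [|u]; [exact: connect0 | move/implyP: (H u)].
move/forallPn => [u]; rewrite negb_imply => /andP[ui iu].
have Hp : anc u \proper anc i.
  apply/properP; split.
    by apply/fintype.subsetP => x; rewrite !inE => xu; apply: connect_trans xu ui.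
  by exists i; rewrite !inE ?connect0.
have [j [ju Hj]] := IH u (leq_trans (proper_card Hp) Hn).
by exists j; split => //; apply: connect_trans ju ui.
Qed.

Lemma sc_conn S : strongly_connectedb a S -> forall i j, i \in S -> j \in S -> connect g i j.
Proof. by move=> /forall_inP H i j iS jS; move/forall_inP: (H i iS) => /(_ j jS). Qed.
Arguments sc_conn {S}.

Lemma source_basic j : (forall u, connect g u j -> connect g j u) ->
  anc j \in basic_bicomponents a.
Proof.
move=> Hj; rewrite inE; apply/and4P; split.
- by apply/existsP; exists j; rewrite inE connect0.
- apply/forall_inP => x; rewrite inE => xj; apply/forall_inP => y; rewrite inE => yj.
  exact: connect_trans xj (Hj _ yj).
- apply/forallP => T; apply/implyP => /andP[ST scT].
  rewrite finset.eqEsubset; apply/andP; split => //.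
  apply/fintype.subsetP => t tT; rewrite inE.
  have jT : j \in T by apply: (fintype.subsetP ST); rewrite inE connect0.
  exact: (sc_conn scT _ _ tT jT).
- apply/forall_inP => i; rewrite inE => ij; apply/forallP => k; apply/implyP.
  rewrite inE => kj; rewrite eq_le Ha_nonneg andbT leNgt; apply/negP => aik.
  by move/negP: kj; apply; apply: connect_trans ij; apply: connect1.
Qed.

Lemma basic_disj S T u : S \in basic_bicomponents a -> T \in basic_bicomponents a ->
  u \in S -> u \in T -> S = T.
Proof.
rewrite !inE => /and4P[_ scS mxS _] /and4P[_ scT mxT _] uS uT.
have scU : strongly_connectedb a (S :|: T).
  apply/forall_inP => x xU; apply/forall_inP => y yU.
  have xu : connect g x u.
    by case/finset.setUP: xU => h; [apply: (sc_conn scS) | apply: (sc_conn scT)].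
  have uy : connect g u y.
    by case/finset.setUP: yU => h; [apply: (sc_conn scS) | apply: (sc_conn scT)].
  exact: connect_trans xu uy.
move/forallP: mxS => /(_ (S :|: T)); rewrite finset.subsetUl scU /= => /eqP HS.
move/forallP: mxT => /(_ (S :|: T)); rewrite finset.subsetUr scU /= => /eqP HT.
by rewrite -HS HT.
Qed.

Fixpoint Rk (r : 'I_N) (k : nat) : {set 'I_N} :=
  if k is k'.+1 then Rk r k' :|: [set i | [exists j in Rk r k', 0 < a i j]]
  else [set r].

Lemma Rk_mono r k d : Rk r k \subset Rk r (k + d).
Proof.
elim: d => [|d IH]; first by rewrite addn0.
by rewrite addnS /=; apply: (fintype.subset_trans IH); exact: finset.subsetUl.
Qed.

Lemma Rk_r r k : r \in Rk r k.
Proof. by apply: (fintype.subsetP (Rk_mono r 0 k)); rewrite /= inE. Qed.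

Lemma Rk_path r p : forall u k, u \in Rk r k -> path g u p -> last u p \in Rk r (k + size p).
Proof.
elim: p => [|x p IH] u k uR /=; first by rewrite addn0.
move=> /andP[gux Hp]; rewrite addnS -addSn; apply: IH => //=.
by rewrite inE; apply/orP; right; rewrite inE; apply/existsP; exists u; rewrite uR.
Qed.

Lemma Rk_all r : (forall i, connect g r i) -> exists K, forall i, i \in Rk r K.
Proof.
move=> Hc.
suff : forall s : seq 'I_N, exists K, forall i, i \in s -> i \in Rk r K.
  by case/(_ (enum 'I_N)) => K HK; exists K => i; apply: HK; rewrite mem_enum.
elim => [|x s [K HK]]; first by exists 0%N.
have [p Hp ->] := connectP (Hc x).
exists (K + size p)%N => i; rewrite inE => /orP[/eqP ->|/HK iK].
  by rewrite addnC; apply: (fintype.subsetP (Rk_mono r _ _)); apply: (@Rk_path r p r 0) => //; rewrite /= inE.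
exact: (fintype.subsetP (Rk_mono r _ _)).
Qed.

Lemma Rk_tree r k : exists par : 'I_N -> 'I_N, par r = r /\
  (forall i, i \in Rk r k -> par i \in Rk r k) /\
  (forall i, i \in Rk r k -> i != r -> 0 < a i (par i)) /\
  (forall i, i \in Rk r k -> exists m, iter m par i = r).
Proof.
elim: k => [|k [par [pr [pin [pe pit]]]]].
  exists id; split => //; split; first by [].
  by split => i; rewrite /= inE => /eqP ->; [rewrite eqxx | exists 0%N].
pose par' i := if i \in Rk r k then par i else odflt i [pick j in Rk r k | 0 < a i j].
have it : forall m i, i \in Rk r k -> iter m par' i = iter m par i /\ iter m par i \in Rk r k.
  elim => [|m IH] i iR //=; have [-> h] := IH i iR; by rewrite /par' h; split => //; apply: pin.
have new : forall i, i \in Rk r k.+1 -> i \notin Rk r k ->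
    par' i \in Rk r k /\ 0 < a i (par' i).
  move=> i; rewrite /= inE => /orP[->//|]; rewrite inE => /existsP[j /andP[jR aij]] niR.
  rewrite /par' (negbTE niR); case: pickP => [l /andP[lR ail]|/(_ j)]; first by [].
  by rewrite jR aij.
exists par'; split; first by rewrite /par' Rk_r.
have sub : Rk r k \subset Rk r k.+1 by rewrite -addn1; exact: Rk_mono.
split.
  move=> i iR; case: (boolP (i \in Rk r k)) => h.
    by rewrite /par' h; apply: (fintype.subsetP sub); apply: pin.
  by apply: (fintype.subsetP sub); case: (new i iR h).
split.
  move=> i iR; case: (boolP (i \in Rk r k)) => h; last by case: (new i iR h).
  by rewrite /par' h; apply: pe.
move=> i iR; case: (boolP (i \in Rk r k)) => h.
  by have [m hm] := pit i h; exists m; have [-> _] := it m i h.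
have [pR _] := new i iR h; have [m hm] := pit _ pR.
by exists m.+1; rewrite iterSr; have [-> _] := it m _ pR.
Qed.

Lemma tree_of_root r : (forall i, connect g r i) -> has_spanning_tree a.
Proof.
move=> Hc; have [K HK] := @Rk_all r Hc; have [par [_ [_ [pe pit]]]] := Rk_tree r K.
by exists r, par; split => i; [apply: pe | apply: pit].
Qed.

Lemma reach_tree r (par : 'I_N -> 'I_N) :
  (forall i, i != r -> 0 < a i (par i)) -> (forall i, exists k, iter k par i = r) ->
  reach [set r].
Proof.
move=> pe pit X HX i iX; exists r; split; first by rewrite inE.
have [k hk] := pit i.
suff : forall k, r \in X \/ iter k par i \in X by case/(_ k) => //; rewrite hk.
elim => [|l [->|IH]]; [by right | by left|].
case: (eqVneq (iter l par i) r) => [<-|ne]; first by left.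
by right; rewrite iterS; apply: (HX _ _ IH); apply: pe.
Qed.

Variable i0 : 'I_N.
Definition rep (S : {set 'I_N}) := odflt i0 [pick x in S].
Definition Rep := [set rep S | S in basic_bicomponents a].

Lemma rep_in S : S \in basic_bicomponents a -> rep S \in S.
Proof.
rewrite inE => /and4P[/existsP[x xS] _ _ _]; rewrite /rep.
by case: pickP => [y //|/(_ x)]; rewrite xS.
Qed.

Lemma reach_basic : reach Rep.
Proof.
move=> X HX i iX; have [j [ji Hj]] := source_ex i.
have jX := @closed_connect X HX _ _ ji iX.
have SB := @source_basic j Hj.
exists (rep (anc j)); split; first by apply/imsetP; exists (anc j).
apply: (@closed_connect X HX _ j _ jX); move: (@rep_in _ SB); by rewrite inE.
Qed.

Lemma count_basic : ~ has_spanning_tree a -> (1 < #|basic_bicomponents a|)%N.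
Proof.
move=> nst; rewrite ltnNge; apply/negP => /card_le1_eqP H; apply: nst.
have [j0 [_ Hj0]] := source_ex i0.
apply: (@tree_of_root j0) => i.
have [j [ji Hj]] := source_ex i.
have E : anc j = anc j0 by apply: H; apply: source_basic.
have : j0 \in anc j by rewrite E inE connect0.
by rewrite inE => h; apply: connect_trans h ji.
Qed.

Lemma basic_noin T i j : T \in basic_bicomponents a -> i \in T -> j \notin T -> a i j = 0.
Proof.
rewrite inE => /and4P[_ _ _ /forall_inP H] iT jT.
by move/forallP: (H i iT) => /(_ j) /implyP /(_ jT) /eqP.
Qed.

Lemma Rep_basic r : r \in Rep -> exists2 T, T \in basic_bicomponents a & r \in T.
Proof. by case/imsetP => T TB ->; exists T => //; apply: rep_in. Qed.

Lemma notnb j : ~~ nonbasic a j -> exists2 T, T \in basic_bicomponents a & j \in T.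
Proof.
by move/forall_inPn => [T TB]; rewrite negbK => jT; exists T.
Qed.

Lemma sum_ind (z : {set 'I_N} -> R) (h : {set 'I_N} -> 'I_N -> R) T j :
  T \in basic_bicomponents a -> j \in T ->
  (forall S, S \in basic_bicomponents a -> h S j = (j \in S)%:R) ->
  \sum_(S in basic_bicomponents a) h S j * z S = z T.
Proof.
move=> TB jT Hh; rewrite (bigD1 T) //= Hh // jT mul1r big1 ?addr0 //.
move=> S /andP[SB ST]; rewrite Hh //; case: (boolP (j \in S)) => jS; last by rewrite mul0r.
by move: ST; rewrite (@basic_disj S T j SB TB jS jT) eqxx.
Qed.

Lemma Lw_opp (w : 'I_N -> R) i : Lw (fun k => - w k) i = - Lw w i.
Proof. by rewrite /Lw -sumrN; apply: eq_bigr => j _; rewrite -opprD mulrN. Qed.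

Lemma Lw_lin (c : {set 'I_N} -> R) (h : {set 'I_N} -> 'I_N -> R) (f : 'I_N -> R) i :
  Lw (fun j => f j - \sum_(S in basic_bicomponents a) h S j * c S) i =
  Lw f i - \sum_(S in basic_bicomponents a) Lw (h S) i * c S.
Proof.
rewrite /Lw.
have E : forall j, a i j * ((f i - \sum_(S in basic_bicomponents a) h S i * c S) -
                           (f j - \sum_(S in basic_bicomponents a) h S j * c S)) =
   a i j * (f i - f j) - \sum_(S in basic_bicomponents a) (a i j * (h S i - h S j)) * c S.
  move=> j.
  have -> : \sum_(S in basic_bicomponents a) (a i j * (h S i - h S j)) * c S =
     a i j * (\sum_(S in basic_bicomponents a) h S i * c S -
              \sum_(S in basic_bicomponents a) h S j * c S).
    by rewrite -sumrB mulr_sumr; apply: eq_bigr => S _; ring.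
  ring.
under eq_bigr do rewrite E.
rewrite sumrB; congr (_ - _); rewrite exchange_big; apply: eq_bigr => S _.
by rewrite mulr_suml.
Qed.

Lemma Lw_const (c : R) i : Lw (fun _ => c) i = 0.
Proof. by rewrite /Lw big1 // => j _; rewrite subrr mulr0. Qed.

Lemma nb_false T j : T \in basic_bicomponents a -> j \in T -> ~~ nonbasic a j.
Proof. by move=> TB jT; apply/negP => /forall_inP /(_ T TB); rewrite jT. Qed.

Lemma mem_same S T i j : S \in basic_bicomponents a -> T \in basic_bicomponents a ->
  i \in T -> j \in T -> (i \in S) = (j \in S).
Proof.
move=> SB TB iT jT; case: (boolP (i \in S)) => iS.
  by rewrite (@basic_disj S T i SB TB iS iT) jT.
apply/esym/negP => jS; move/negP: iS; apply.
by rewrite (@basic_disj S T j SB TB jS jT) iT.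
Qed.

(* basic rows of L only see their component *)
Lemma Lw_basic (w : 'I_N -> R) T i : T \in basic_bicomponents a -> i \in T ->
  (forall j, j \in T -> w j = w i) -> Lw w i = 0.
Proof.
move=> TB iT Hw; rewrite /Lw big1 // => j _.
case: (boolP (j \in T)) => jT; first by rewrite Hw // subrr mulr0.
by rewrite (@basic_noin T i j TB iT jT) mul0r.
Qed.

Definition Phi : 'M[R]_N :=
  \matrix_(j, i) (if nonbasic a i then laplacian a i j else (j == i)%:R).

Lemma Phi_entry (v : 'rV[R]_N) i :
  (v *m Phi) 0 i = if nonbasic a i then Lw (fun k => v 0 k) i else v 0 i.
Proof.
rewrite mxE; case: ifP => nb.
  rewrite -lapE; apply: eq_bigr => j _; by rewrite mxE nb mulrC.
under eq_bigr do rewrite mxE nb.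
rewrite (bigD1 i) //= eqxx mulr1 big1 ?addr0 // => j /negbTE ->.
by rewrite mulr0.
Qed.

Lemma Phi_inj (v : 'rV[R]_N) : v *m Phi = 0 -> v = 0.
Proof.
move=> h; have E : forall i, (v *m Phi) 0 i = 0 by move=> i; rewrite h mxE.
have Eb : forall i, ~~ nonbasic a i -> v 0 i = 0.
  by move=> i nb; have := E i; rewrite Phi_entry (negbTE nb).
apply/rowP => i; rewrite mxE.
apply: (@inj Rep reach_basic (fun k => v 0 k)) => [k|r /Rep_basic [T TB rT]].
  case: (boolP (nonbasic a k)) => nb; first by have := E k; rewrite Phi_entry nb.
  have [T TB kT] := notnb _ nb.
  apply: (@Lw_basic _ T k TB kT) => j jT.
  by rewrite !Eb //; apply: (@nb_false T).
by apply: Eb; apply: (@nb_false T).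
Qed.

Variable Bm : 'M[R]_N.
Hypothesis HBm : Bm *m Phi = 1%:M.

Definition tgt (S : {set 'I_N}) : 'rV[R]_N :=
  \row_i (if nonbasic a i then 0 else (i \in S)%:R).
Definition vS (S : {set 'I_N}) (j : 'I_N) : R := (tgt S *m Bm) 0 j.

Lemma vS_entry S i :
  (if nonbasic a i then Lw (vS S) i else vS S i) = if nonbasic a i then 0 else (i \in S)%:R.
Proof.
have : (tgt S *m Bm) *m Phi = tgt S by rewrite -mulmxA HBm mulmx1.
move/rowP => /(_ i); rewrite Phi_entry => E.
have <- : tgt S 0 i = (if nonbasic a i then 0 else (i \in S)%:R) by rewrite mxE.
exact: E.
Qed.

Lemma vS_basic S i : ~~ nonbasic a i -> vS S i = (i \in S)%:R.
Proof. by move=> nb; have := vS_entry S i; rewrite (negbTE nb). Qed.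

Lemma vS_L S : S \in basic_bicomponents a -> forall i, Lw (vS S) i = 0.
Proof.
move=> SB i; case: (boolP (nonbasic a i)) => nb; first by have := vS_entry S i; rewrite nb.
have [T TB iT] := notnb _ nb.
apply: (@Lw_basic _ T i TB iT) => j jT.
rewrite !vS_basic; try by apply: (@nb_false T).
by rewrite (@mem_same S T j i SB TB jT iT).
Qed.

Lemma vS_ge0 S : S \in basic_bicomponents a -> forall j, 0 <= vS S j.
Proof.
move=> SB j; rewrite -oppr_le0.
apply: (@maxp Rep reach_basic (fun k => - vS S k)) => [i|r /Rep_basic [T TB rT]].
  by rewrite Lw_opp vS_L // oppr0.
by rewrite vS_basic ?oppr_le0 ?ler0n //; apply: (@nb_false T).
Qed.

Lemma vS_sum j : \sum_(S in basic_bicomponents a) vS S j = 1.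
Proof.
pose w := fun k => 1 - \sum_(S in basic_bicomponents a) vS S k * 1.
have : w j = 0.
  apply: (@inj Rep reach_basic w) => [i|r /Rep_basic [T TB rT]].
    rewrite /w Lw_lin Lw_const big1 ?subrr // => S SB; by rewrite vS_L // mul0r.
  rewrite /w (@sum_ind (fun _ => 1) vS T r TB rT) ?subrr // => S SB.
  by apply: vS_basic; apply: (@nb_false T).
by rewrite /w => /eqP; rewrite subr_eq0 => /eqP ->; apply: eq_bigr => S _; rewrite mulr1.
Qed.

End G.
Arguments Lw {R N}.



Lemma Lw_shift (R : realType) (N : nat) (a : 'M[R]_N) (f : 'I_N -> R) (c : R) i :
  Lw a (fun k => f k - c) i = Lw a f i.
Proof. by rewrite /Lw; apply: eq_bigr => j _; congr (_ * _); ring. Qed.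

Lemma out_van (R : realType) (N n m p : nat) (a : 'M[R]_N) (A : 'M[R]_n)
  (B : 'M[R]_(n, m)) (C : 'M[R]_(p, n)) (y : 'I_N -> R -> 'cV[R]_p) :
  (forall i, a i i = 0) ->
  stable_protocol_output a A B C y ->
  forall i c, ((fun t => Lw a (fun k => y k t c ord0) i) @ +oo --> (0:R))%classic.
Proof.
move=> Hd Hy i c.
have key : forall x : 'I_N -> R -> 'cV[R]_n, (forall i t, y i t = C *m x i t) ->
    vanishes (zeta a C x i) -> ((fun t => Lw a (fun k => y k t c ord0) i) @ +oo --> (0:R))%classic.
  move=> x Hyx /(_ c) H.
  have E : forall t, zeta a C x i t c ord0 = Lw a (fun k => y k t c ord0) i.
    move=> t; rewrite -lapE // /zeta summxE; apply: eq_bigr => j _.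
    by rewrite Hyx mxE.
  by rewrite (eq_cvg _ _ E) in H.
case: Hy => [[q [f [g' [[_ Hst] [x [xi [Hsol Hyx]]]]]]] | [q [f [g' [[_ Hst] [x [xc [Hsol Hyx]]]]]]]].
  exact: (key x Hyx (Hst x xi Hsol i)).
exact: (key x Hyx (Hst x xc Hsol i).1).
Qed.


Theorem lemma1 (R : realType) (N : nat) (a : 'M[R]_N)
  (HN : (0 < N)%N)
  (Ha_nonneg : forall i j, 0 <= a i j) (Ha_diag : forall i, a i i = 0) :
  (* (i) directed spanning tree => output synchronization *)
  (has_spanning_tree a ->
     forall (n m p : nat) (A : 'M[R]_n) (B : 'M[R]_(n, m)) (C : 'M[R]_(p, n)),
       stabilizable A B -> detectable C A ->
       forall y : 'I_N -> R -> 'cV[R]_p, stable_protocol_output a A B C y ->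
       forall i j : 'I_N, vanishes (fun t => y i t - y j t)) /\
  (* (ii) no directed spanning tree *)
  (~ has_spanning_tree a ->
     (1 < #|basic_bicomponents a|)%N /\
     exists beta : {set 'I_N} -> 'I_N -> R,
       (forall S j, S \in basic_bicomponents a -> nonbasic a j -> 0 <= beta S j) /\
       (forall j, nonbasic a j -> \sum_(S in basic_bicomponents a) beta S j = 1) /\
       forall (n m p : nat) (A : 'M[R]_n) (B : 'M[R]_(n, m)) (C : 'M[R]_(p, n)),
         stabilizable A B -> detectable C A ->
         forall y : 'I_N -> R -> 'cV[R]_p, stable_protocol_output a A B C y ->
         exists ys : {set 'I_N} -> R -> 'cV[R]_p,
           (forall S j, S \in basic_bicomponents a -> j \in S ->
              vanishes (fun t => y j t - ys S t)) /\
           (forall j, nonbasic a j ->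
              vanishes (fun t => y j t -
                          \sum_(S in basic_bicomponents a) beta S j *: ys S t))).
Proof.
split.
  move=> [r [par [pe pit]]] n m p A B C _ _ y Hy i j c.
  have hR := @reach_tree R N a r par pe pit.
  pose w k t := y k t c ord0 - y r t c ord0.
  have Hw : forall k, ((w k) @ +oo --> (0:R))%classic.
    apply: (@partA R N a Ha_nonneg Ha_diag _ hR w) => [k|r' t]; last by rewrite inE => /eqP ->; rewrite /w subrr.
    have E : forall t, Lw a (w^~ t) k = Lw a (fun l => y l t c ord0) k.
      by move=> t; rewrite /w Lw_shift.
    rewrite (eq_cvg _ _ E); exact: (@out_van R N n m p a A B C y Ha_diag Hy).
  have E : forall t, (y i t - y j t) c ord0 = w i t - w j t.
    by move=> t; rewrite /w !mxE; ring.
  rewrite (eq_cvg _ _ E); exact: vanish_sub.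
move=> nst; split; first exact: (@count_basic R N a Ha_nonneg (Ordinal HN) nst).
pose i0 := Ordinal HN.
have [Bm HB] := @inj_rinv R N N (Phi R N a) (@Phi_inj R N a Ha_nonneg Ha_diag i0).
have HBm := mulmx1C HB.
exists (vS R N a Bm); split.
  by move=> S j SB _; apply: (@vS_ge0 R N a Ha_nonneg Ha_diag i0 Bm HBm).
split.
  by move=> j _; apply: (@vS_sum R N a Ha_nonneg Ha_diag i0 Bm HBm).
move=> n m p A B C _ _ y Hy.
exists (fun S => y (rep N i0 S)).
have main : forall c k, ((fun t => y k t c ord0 -
    \sum_(S in basic_bicomponents a) vS R N a Bm S k * y (rep N i0 S) t c ord0) @ +oo --> (0:R))%classic.
  move=> c.
  pose w k t := y k t c ord0 -
    \sum_(S in basic_bicomponents a) vS R N a Bm S k * y (rep N i0 S) t c ord0.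
  apply: (@partA R N a Ha_nonneg Ha_diag _ (@reach_basic R N a Ha_nonneg i0) w) => [k|r t].
    have E : forall t, Lw a (w^~ t) k = Lw a (fun l => y l t c ord0) k.
      move=> t; rewrite /w (@Lw_lin R N a (fun S => y (rep N i0 S) t c ord0) (vS R N a Bm)).
      by rewrite big1 ?subr0 // => S SB; rewrite (@vS_L R N a Ha_diag Bm HBm _ SB) mul0r.
    rewrite (eq_cvg _ _ E); exact: (@out_van R N n m p a A B C y Ha_diag Hy).
  case/imsetP => T TB ->; rewrite /w.
  rewrite (@sum_ind R N a (fun S => y (rep N i0 S) t c ord0) _ _ _ TB (@rep_in R N a i0 _ TB)) ?subrr //.
  move=> S SB; apply: (@vS_basic R N a Ha_diag Bm HBm).
  exact: (@nb_false R N a _ _ TB (@rep_in R N a i0 _ TB)).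
split.
  move=> S j SB jS c.
  have E : forall t, (y j t - y (rep N i0 S) t) c ord0 = y j t c ord0 -
    \sum_(S in basic_bicomponents a) vS R N a Bm S j * y (rep N i0 S) t c ord0.
    move=> t; rewrite (@sum_ind R N a (fun S => y (rep N i0 S) t c ord0) _ _ _ SB jS) ?mxE //.
    move=> S' S'B; apply: (@vS_basic R N a Ha_diag Bm HBm).
    exact: (@nb_false R N a _ _ SB jS).
  rewrite (eq_cvg _ _ E); exact: main.
move=> j _ c.
have E : forall t, (y j t - \sum_(S in basic_bicomponents a) vS R N a Bm S j *: y (rep N i0 S) t) c ord0
  = y j t c ord0 -
    \sum_(S in basic_bicomponents a) vS R N a Bm S j * y (rep N i0 S) t c ord0.
  by move=> t; rewrite !mxE summxE; congr (_ - _); apply: eq_bigr => S _; rewrite mxE.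
rewrite (eq_cvg _ _ E); exact: main.
Qed.
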